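(* Let $\alpha\in\mathbb{R}\setminus\{0\}$ and let $A=\{(x_1,y_1),\dots,(x_\ell,y_\ell)\}\subset\mathbb{R}_+^{m+n}$. Then: (a) $T_{\mathbb Q_\alpha,C}(A)$ and $T_{\mathbb Q_\alpha,V}(A)$ are closed; (b) $T_{\mathbb Q_\alpha,C}(A)$ and $T_{\mathbb Q_\alpha,V}(A)$ are $\mathbb Q_\alpha$-convex; (c) $T_{\mathbb Q_\alpha,C}(A)$ and $T_{\mathbb Q_\alpha,V}(A)$ satisfy free disposal, i.e. $T=(T+K)\cap\mathbb{R}_+^{m+n}$ for each of them; (d) $T_{\mathbb Q_\alpha,C}(A)$ is graph-translation homothetic: for all $(x,y)\in T_{\mathbb Q_\alpha,C}(A)$ and all $\delta\in\mathbb{R}$ with $(x+\delta1\!\!1_m,y+\delta1\!\!1_n)\ge0$, one has $(x+\delta1\!\!1_m,y+\delta1\!\!1_n)\in T_{\mathbb Q_\alpha,C}(A)$.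
   Context: $K=\mathbb{R}_+^m\times(-\mathbb{R}_+^n)$; $1\!\!1_m$ is the vector of ones; $\mathbf e$, $\mathbf{ln}$ are componentwise. $\mathbb M_\alpha=\mathbb{R}\cup\{-\infty\}$ if $\alpha>0$, $\mathbb M_\alpha=\mathbb{R}\cup\{+\infty\}$ if $\alpha<0$, with $e^{\alpha t}=0$ when $\alpha t=-\infty$ and $\ln0=-\infty$. The quantized technologies are $$T_{\mathbb Q_\alpha,C}(A)=\Big\{(x,y)\in\mathbb{R}_+^{m+n}: x\ge\tfrac1\alpha\mathbf{ln}\Big(\sum_{k}e^{\alpha t_k}\mathbf e^{\alpha x_k}\Big),\ y\le\tfrac1\alpha\mathbf{ln}\Big(\sum_k e^{\alpha t_k}\mathbf e^{\alpha y_k}\Big)\text{ for some }t\in\mathbb M_\alpha^\ell\Big\},$$ and $T_{\mathbb Q_\alpha,V}(A)$ is defined in the same way with the additional constraint $\frac1\alpha\ln\big(\sum_k e^{\alpha t_k}\big)=0$. A set $C\subset\mathbb M_\alpha^{d}$ is $\mathbb Q_\alpha$-convex if $\{\mathbf e^{\alpha z}:z\in C\}$ is convex. *)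

(* Defs.v *)
From HB Require Import structures.
From mathcomp Require Import all_boot all_order all_algebra.
From mathcomp Require Import all_classical all_reals all_analysis.
Set Implicit Arguments. Unset Strict Implicit. Unset Printing Implicit Defensive.
Import Order.TTheory GRing.Theory Num.Theory.
Import numFieldNormedType.Exports.
Local Open Scope classical_set_scope.
Local Open Scope ring_scope.

Section QDefs.
Variable R : realType.

Definition Malpha (alpha : R) : set (\bar R) :=
  if 0 < alpha then [set t | t != +oo%E] else [set t | t != -oo%E].

(* e^{alpha t}, with e^{alpha t} = 0 when alpha t = -oo (t in M_alpha) *)
Definition eexpa (alpha : R) (t : \bar R) : R :=
  match t with
  | EFin r => expR (alpha * r)
  | _ => 0
  end.

(* (1/alpha) ln s for s >= 0, with ln 0 = -oo *)
Definition qlog (alpha : R) (s : R) : \bar R :=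
  if s == 0 then (if 0 < alpha then -oo%E else +oo%E)
  else ((ln s) / alpha)%:E.

(* the quantized technologies T_{Q_alpha,C}(A) and T_{Q_alpha,V}(A), where
   A = {(X k, Y k) : k < l} *)
Definition TQC (alpha : R) (m n l : nat)
    (X : 'I_l -> 'rV[R]_m) (Y : 'I_l -> 'rV[R]_n) : set ('rV[R]_m * 'rV[R]_n) :=
  [set p : 'rV[R]_m * 'rV[R]_n | (forall i, 0 <= p.1 0 i) /\ (forall j, 0 <= p.2 0 j) /\
     exists t : 'I_l -> \bar R, (forall k, Malpha alpha (t k)) /\
       (forall i, (qlog alpha (\sum_(k < l) eexpa alpha (t k) * expR (alpha * X k 0 i))
                    <= (p.1 0 i)%:E)%E) /\
       (forall j, ((p.2 0 j)%:E <=
                    qlog alpha (\sum_(k < l) eexpa alpha (t k) * expR (alpha * Y k 0 j)))%E)].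

Definition TQV (alpha : R) (m n l : nat)
    (X : 'I_l -> 'rV[R]_m) (Y : 'I_l -> 'rV[R]_n) : set ('rV[R]_m * 'rV[R]_n) :=
  [set p : 'rV[R]_m * 'rV[R]_n | (forall i, 0 <= p.1 0 i) /\ (forall j, 0 <= p.2 0 j) /\
     exists t : 'I_l -> \bar R, (forall k, Malpha alpha (t k)) /\
       qlog alpha (\sum_(k < l) eexpa alpha (t k)) = 0%:E /\
       (forall i, (qlog alpha (\sum_(k < l) eexpa alpha (t k) * expR (alpha * X k 0 i))
                    <= (p.1 0 i)%:E)%E) /\
       (forall j, ((p.2 0 j)%:E <=
                    qlog alpha (\sum_(k < l) eexpa alpha (t k) * expR (alpha * Y k 0 j)))%E)].

Definition expa_map (alpha : R) (m n : nat) (p : 'rV[R]_m * 'rV[R]_n)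
  : 'rV[R]_m * 'rV[R]_n :=
  (map_mx (fun r => expR (alpha * r)) p.1, map_mx (fun r => expR (alpha * r)) p.2).

Definition Qconvex (alpha : R) (m n : nat) (C : set ('rV[R]_m * 'rV[R]_n)) : Prop :=
  forall u v, (@expa_map alpha m n @` C) u -> (@expa_map alpha m n @` C) v ->
  forall lam : R, 0 <= lam <= 1 ->
    (@expa_map alpha m n @` C) (lam *: u.1 + (1 - lam) *: v.1, lam *: u.2 + (1 - lam) *: v.2).

Definition nonneg_orthant (m n : nat) : set ('rV[R]_m * 'rV[R]_n) :=
  [set p : 'rV[R]_m * 'rV[R]_n | (forall i, 0 <= p.1 0 i) /\ (forall j, 0 <= p.2 0 j)].

Definition coneK (m n : nat) : set ('rV[R]_m * 'rV[R]_n) :=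
  [set p : 'rV[R]_m * 'rV[R]_n | (forall i, 0 <= p.1 0 i) /\ (forall j, p.2 0 j <= 0)].

Definition free_disposal (m n : nat) (T : set ('rV[R]_m * 'rV[R]_n)) : Prop :=
  T = [set p : 'rV[R]_m * 'rV[R]_n | exists q, exists k, T q /\ coneK k /\ p = (q.1 + k.1, q.2 + k.2)]
      `&` @nonneg_orthant m n.

Definition graph_translation_homothetic (m n : nat) (T : set ('rV[R]_m * 'rV[R]_n))
  : Prop :=
  forall x y, T (x, y) -> forall delta : R,
    @nonneg_orthant m n (x + const_mx delta, y + const_mx delta) ->
    T (x + const_mx delta, y + const_mx delta).

End QDefs.

(* Main.v *)
Require Import Defs.
From mathcomp Require Import all_boot all_order all_algebra.
From mathcomp Require Import all_classical all_reals all_analysis.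
From mathcomp Require Import ring lra.
Import Order.TTheory GRing.Theory Num.Theory.
Import numFieldNormedType.Exports.
Local Open Scope classical_set_scope.
Local Open Scope ring_scope.

Lemma qlog_le (R : realType) (a s x : R) : a != 0 -> 0 <= s ->
  (qlog a s <= x%:E)%E <-> 0 <= a * expR (a * x) - a * s.
Proof.
move=> a0 s0; rewrite /qlog; have [->|sn0] := eqVneq s 0.
  have e0 := expR_gt0 (a * x).
  case: (ltgtP a 0) => [an|ap|ae]; last by rewrite ae eqxx in a0.
  - have h : a * expR (a * x) < 0 by rewrite nmulr_rlt0.
    split => [|H]; first by rewrite leye_eq.
    exfalso; lra.
  - have h : 0 < a * expR (a * x) by rewrite pmulr_rgt0.
    by split => _; [lra | exact: leNye].
have sp : 0 < s by rewrite lt_def sn0 s0.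
have e0 := expR_gt0 (a * x).
rewrite lee_fin.
case: (ltgtP a 0) => [an|ap|ae]; last by rewrite ae eqxx in a0.
- rewrite ler_ndivrMr // -ler_expR lnK ?posrE // subr_ge0 ler_nM2l // mulrC.
  by [].
- rewrite ler_pdivrMr // -ler_expR lnK ?posrE // subr_ge0 ler_pM2l // mulrC.
  by [].
Qed.

Lemma le_qlog (R : realType) (a s y : R) : a != 0 -> 0 <= s ->
  (y%:E <= qlog a s)%E <-> 0 <= a * s - a * expR (a * y).
Proof.
move=> a0 s0; rewrite /qlog; have [->|sn0] := eqVneq s 0.
  have e0 := expR_gt0 (a * y).
  case: (ltgtP a 0) => [an|ap|ae]; last by rewrite ae eqxx in a0.
  - have h : a * expR (a * y) < 0 by rewrite nmulr_rlt0.
    by split => _; [lra | exact: leey].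
  - have h : 0 < a * expR (a * y) by rewrite pmulr_rgt0.
    split => [|H]; first by rewrite leeNy_eq.
    exfalso; lra.
have sp : 0 < s by rewrite lt_def sn0 s0.
have e0 := expR_gt0 (a * y).
rewrite lee_fin.
case: (ltgtP a 0) => [an|ap|ae]; last by rewrite ae eqxx in a0.
- rewrite ler_ndivlMr // -ler_expR lnK ?posrE // subr_ge0 ler_nM2l // mulrC.
  by [].
- rewrite ler_pdivlMr // -ler_expR lnK ?posrE // subr_ge0 ler_pM2l // mulrC.
  by [].
Qed.

Lemma qlog_eq0 (R : realType) (a s : R) : a != 0 -> 0 <= s ->
  qlog a s = 0%:E <-> s = 1.
Proof.
move=> a0 s0; rewrite /qlog; have [->|sn0] := eqVneq s 0.
  have h10 : (0 : R) <> 1 by move/eqP; rewrite eq_sym oner_eq0.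
  by case: ifP => _; split => H; [discriminate H | exfalso; exact: h10 H | discriminate H | exfalso; exact: h10 H].
have sp : 0 < s by rewrite lt_def sn0 s0.
split.
- case=> /eqP; rewrite mulf_eq0 invr_eq0 (negbTE a0) orbF => /eqP h.
  by rewrite -(lnK sp) h expR0.
- by move=> ->; rewrite ln1 mul0r.
Qed.

Definition tinv {R : realType} (a r : R) : \bar R :=
  if r == 0 then (if 0 < a then -oo%E else +oo%E) else (ln r / a)%:E.

Lemma eexpa_tinv (R : realType) (a r : R) : a != 0 -> 0 <= r -> eexpa a (tinv a r) = r.
Proof.
move=> a0 r0; rewrite /tinv; have [->|rn0] := eqVneq r 0; first by case: ifP.
have rp : 0 < r by rewrite lt_def rn0 r0.
by rewrite /= mulrC -mulrA mulVf // mulr1 lnK.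
Qed.

Lemma Malpha_tinv (R : realType) (a r : R) : Malpha a (tinv a r).
Proof. by rewrite /Malpha /tinv; case: ifP => ap; case: ifP => //=; rewrite ap. Qed.

Lemma eexpa_ge0 (R : realType) (a : R) t : 0 <= eexpa a t.
Proof. by case: t => //= r; exact: expR_ge0. Qed.


Definition cstr {R : realType} (a : R) {m n l : nat} (X : 'I_l -> 'rV[R]_m)
  (Y : 'I_l -> 'rV[R]_n) (V : bool) (p : 'rV[R]_m * 'rV[R]_n) (u : 'rV[R]_l) : Prop :=
 [/\ (forall i, 0 <= p.1 0 i) /\ (forall j, 0 <= p.2 0 j), (forall k, 0 <= u 0 k),
     (V -> \sum_k u 0 k = 1),
     (forall i, 0 <= a * expR (a * p.1 0 i) - a * (\sum_k u 0 k * expR (a * X k 0 i))) &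
     (forall j, 0 <= a * (\sum_k u 0 k * expR (a * Y k 0 j)) - a * expR (a * p.2 0 j))].

Lemma sum_row_eexpa {R : realType} (a : R) {l} (t : 'I_l -> \bar R) (c : 'I_l -> R) :
  \sum_k (\row_k eexpa a (t k)) 0 k * c k = \sum_k eexpa a (t k) * c k.
Proof. by apply: eq_bigr => k _; rewrite mxE. Qed.

Lemma sum_tinv {R : realType} {a : R} {l} {u : 'rV[R]_l} (c : 'I_l -> R) :
  a != 0 -> (forall k, 0 <= u 0 k) ->
  \sum_k eexpa a (tinv a (u 0 k)) * c k = \sum_k u 0 k * c k.
Proof. by move=> a0 hu; apply: eq_bigr => k _; rewrite eexpa_tinv. Qed.

Lemma sum_ge0_e {R : realType} (a : R) {l} (t : 'I_l -> \bar R) (c : 'I_l -> R) :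
  0 <= \sum_k eexpa a (t k) * expR (c k).
Proof. by apply: sumr_ge0 => k _; apply: mulr_ge0; [exact: eexpa_ge0 | exact: expR_ge0]. Qed.

Lemma TQC_iff (R : realType) (a : R) m n l (X : 'I_l -> 'rV[R]_m)
  (Y : 'I_l -> 'rV[R]_n) p :
  a != 0 -> TQC a X Y p <-> exists u, cstr a X Y false p u.
Proof.
move=> a0; split.
- case=> [h1 [h2 [t [Mt [hx hy]]]]].
  exists (\row_k eexpa a (t k)); split => //.
  + by move=> k; rewrite mxE; exact: eexpa_ge0.
  + move=> i; rewrite (sum_row_eexpa a t (fun k => expR (a * X k 0 i))).
    by apply/qlog_le => //; exact: sum_ge0_e.
  + move=> j; rewrite (sum_row_eexpa a t (fun k => expR (a * Y k 0 j))).
    by apply/le_qlog => //; exact: sum_ge0_e.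
- case=> u [[h1 h2] hu _ hx hy]; split => //; split => //.
  exists (fun k => tinv a (u 0 k)); split; first by move=> k; exact: Malpha_tinv.
  split => [i|j].
  + apply/qlog_le => //; first exact: sum_ge0_e.
    by rewrite (sum_tinv (fun k => expR (a * X k 0 i)) a0 hu).
  + apply/le_qlog => //; first exact: sum_ge0_e.
    by rewrite (sum_tinv (fun k => expR (a * Y k 0 j)) a0 hu).
Qed.

Lemma TQV_iff (R : realType) (a : R) m n l (X : 'I_l -> 'rV[R]_m)
  (Y : 'I_l -> 'rV[R]_n) p :
  a != 0 -> TQV a X Y p <-> exists u, cstr a X Y true p u.
Proof.
move=> a0; split.
- case=> [h1 [h2 [t [Mt [h1s [hx hy]]]]]].
  exists (\row_k eexpa a (t k)); split => //.
  + by move=> k; rewrite mxE; exact: eexpa_ge0.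
  + move=> _; under eq_bigr do rewrite mxE.
    have S0 : 0 <= \sum_k eexpa a (t k) by apply: sumr_ge0 => k _; exact: eexpa_ge0.
    exact: ((@qlog_eq0 _ _ _ a0 S0).1 h1s).
  + move=> i; rewrite (sum_row_eexpa a t (fun k => expR (a * X k 0 i))).
    by apply/qlog_le => //; exact: sum_ge0_e.
  + move=> j; rewrite (sum_row_eexpa a t (fun k => expR (a * Y k 0 j))).
    by apply/le_qlog => //; exact: sum_ge0_e.
- case=> u [[h1 h2] hu h1s hx hy]; split => //; split => //.
  exists (fun k => tinv a (u 0 k)); split; first by move=> k; exact: Malpha_tinv.
  split.
    have S0 : 0 <= \sum_k eexpa a (tinv a (u 0 k)) by apply: sumr_ge0 => k _; exact: eexpa_ge0.
    apply/(@qlog_eq0 _ _ _ a0 S0).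
    have := sum_tinv (fun k => 1) a0 hu.
    under eq_bigr do rewrite mulr1.
    under [X in _ = X -> _]eq_bigr do rewrite mulr1.
    by move=> ->; exact: h1s.
  split => [i|j].
  + apply/qlog_le => //; first exact: sum_ge0_e.
    by rewrite (sum_tinv (fun k => expR (a * X k 0 i)) a0 hu).
  + apply/le_qlog => //; first exact: sum_ge0_e.
    by rewrite (sum_tinv (fun k => expR (a * Y k 0 j)) a0 hu).
Qed.


Lemma expR_lnd {R : realType} (a r : R) : a != 0 -> 0 < r -> expR (a * (ln r / a)) = r.
Proof. by move=> a0 rp; rewrite mulrC -mulrA mulVf // mulr1 lnK. Qed.

Lemma comb_ge0 {R : realType} (lam A B : R) : 0 <= lam <= 1 -> 0 <= A -> 0 <= B ->
  0 <= lam * A + (1 - lam) * B.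
Proof.
case/andP=> l0 l1 hA hB; apply: addr_ge0; apply: mulr_ge0 => //.
by rewrite subr_ge0.
Qed.

Lemma comb_gt0 {R : realType} (lam A B : R) : 0 <= lam <= 1 -> 0 < A -> 0 < B ->
  0 < lam * A + (1 - lam) * B.
Proof.
case/andP=> l0 l1 hA hB; rewrite le_eqVlt in l0; case/orP: l0 => [/eqP <-|lp].
  by rewrite mul0r add0r subr0 mul1r.
have h1 := mulr_gt0 lp hA.
have h2 : 0 <= (1 - lam) * B by apply: mulr_ge0; [rewrite subr_ge0 | exact: ltW].
lra.
Qed.

Lemma ge0_exp {R : realType} (a x : R) : 0 <= x -> 0 <= a * (expR (a * x) - 1).
Proof.
move=> x0; case: (ltgtP a 0) => [an|ap|->]; last by rewrite mul0r.
- rewrite nmulr_rge0 // subr_le0 -expR0 ler_expR; exact: mulr_le0_ge0 (ltW an) x0.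
- rewrite pmulr_rge0 // subr_ge0 -expR0 ler_expR; exact: mulr_ge0 (ltW ap) x0.
Qed.

Lemma ge0_lnd {R : realType} (a r : R) : a != 0 -> 0 < r -> 0 <= a * (r - 1) ->
  0 <= ln r / a.
Proof.
move=> a0 rp; case: (ltgtP a 0) => [an|ap|ae]; last by rewrite ae eqxx in a0.
- rewrite nmulr_rge0 // subr_le0 => r1.
  rewrite -(lnK rp) -expR0 ler_expR in r1.
  by apply: mulr_le0 => //; rewrite invr_le0 ltW.
- rewrite pmulr_rge0 // subr_ge0 => r1.
  rewrite -(lnK rp) -expR0 ler_expR in r1.
  by rewrite divr_ge0 // ltW.
Qed.

Lemma sum_comb {R : realType} {l} (lam : R) (w w' : 'rV[R]_l) (c : 'I_l -> R) :
  \sum_k (\row_k (lam * w 0 k + (1 - lam) * w' 0 k)) 0 k * c k =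
  lam * (\sum_k w 0 k * c k) + (1 - lam) * (\sum_k w' 0 k * c k).
Proof.
rewrite !mulr_sumr -big_split; apply: eq_bigr => k _ /=; rewrite mxE; ring.
Qed.

Lemma Qconvex_cstr (R : realType) (a : R) m n l (X : 'I_l -> 'rV[R]_m)
  (Y : 'I_l -> 'rV[R]_n) V (T : set ('rV[R]_m * 'rV[R]_n)) :
  a != 0 -> (forall p, T p <-> exists u, cstr a X Y V p u) -> Qconvex a T.
Proof.
move=> a0 HT u v [p Tp <-] [p' Tp' <-] lam hl.
have [w [[h1 h2] hw hs hx hy]] := (HT p).1 Tp.
have [w' [[h1' h2'] hw' hs' hx' hy']] := (HT p').1 Tp'.
pose r1 i := lam * expR (a * p.1 0 i) + (1 - lam) * expR (a * p'.1 0 i).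
pose r2 j := lam * expR (a * p.2 0 j) + (1 - lam) * expR (a * p'.2 0 j).
have r1p i : 0 < r1 i by apply: comb_gt0 => //; exact: expR_gt0.
have r2p j : 0 < r2 j by apply: comb_gt0 => //; exact: expR_gt0.
exists (\row_i (ln (r1 i) / a), \row_j (ln (r2 j) / a)); last first.
  rewrite /expa_map /=; congr pair; apply/matrixP => i j;
    by rewrite !mxE (ord1 i) expR_lnd // !mxE.
apply/HT; exists (\row_k (lam * w 0 k + (1 - lam) * w' 0 k)); split.
- split => [i|j]; rewrite mxE; apply: ge0_lnd => //.
  + have -> : a * (r1 i - 1) = lam * (a * (expR (a * p.1 0 i) - 1))
       + (1 - lam) * (a * (expR (a * p'.1 0 i) - 1)) by rewrite /r1; ring.
    by apply: comb_ge0 => //; exact: ge0_exp.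
  + have -> : a * (r2 j - 1) = lam * (a * (expR (a * p.2 0 j) - 1))
       + (1 - lam) * (a * (expR (a * p'.2 0 j) - 1)) by rewrite /r2; ring.
    by apply: comb_ge0 => //; exact: ge0_exp.
- by move=> k; rewrite mxE; apply: comb_ge0.
- move=> hV; have := sum_comb lam w w' (fun _ => 1).
  under eq_bigr do rewrite mulr1.
  under [X in _ = _ * X + _ -> _]eq_bigr do rewrite mulr1.
  under [X in _ = _ + _ * X -> _]eq_bigr do rewrite mulr1.
  by move=> ->; rewrite hs // hs' // !mulr1 addrC subrK.
- move=> i; rewrite mxE expR_lnd // sum_comb.
  have -> : a * r1 i - a * (lam * (\sum_k w 0 k * expR (a * X k 0 i)) +
      (1 - lam) * (\sum_k w' 0 k * expR (a * X k 0 i))) =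
    lam * (a * expR (a * p.1 0 i) - a * (\sum_k w 0 k * expR (a * X k 0 i))) +
    (1 - lam) * (a * expR (a * p'.1 0 i) - a * (\sum_k w' 0 k * expR (a * X k 0 i))).
    by rewrite /r1; ring.
  exact: comb_ge0.
- move=> j; rewrite mxE expR_lnd // sum_comb.
  have -> : a * (lam * (\sum_k w 0 k * expR (a * Y k 0 j)) +
      (1 - lam) * (\sum_k w' 0 k * expR (a * Y k 0 j))) - a * r2 j =
    lam * (a * (\sum_k w 0 k * expR (a * Y k 0 j)) - a * expR (a * p.2 0 j)) +
    (1 - lam) * (a * (\sum_k w' 0 k * expR (a * Y k 0 j)) - a * expR (a * p'.2 0 j)).
    by rewrite /r2; ring.
  exact: comb_ge0.
Qed.


Lemma mono_e {R : realType} (a x d : R) : 0 <= d ->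
  a * expR (a * x) <= a * expR (a * (x + d)).
Proof.
move=> d0; case: (ltgtP a 0) => [an|ap|->]; last by rewrite !mul0r.
- rewrite ler_nM2l // ler_expR mulrDr gerDl; exact: mulr_le0_ge0 (ltW an) d0.
- rewrite ler_pM2l // ler_expR mulrDr lerDl; exact: mulr_ge0 (ltW ap) d0.
Qed.

Lemma free_disposal_cstr (R : realType) (a : R) m n l (X : 'I_l -> 'rV[R]_m)
  (Y : 'I_l -> 'rV[R]_n) V (T : set ('rV[R]_m * 'rV[R]_n)) :
  (forall p, T p <-> exists u, cstr a X Y V p u) -> free_disposal T.
Proof.
move=> HT; rewrite /free_disposal; apply/seteqP; split => p.
- move=> Tp; have [w [[h1 h2] _ _ _ _]] := (HT p).1 Tp; split; last by split.
  exists p, (0, 0); split => //; split; last by rewrite !addr0; exact: surjective_pairing.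
  by split => i /=; rewrite mxE.
case=> [[q0 [kk [Tq [[k1 k2] Ep]]]] [ho1 ho2]]; rewrite Ep in ho1 ho2 *.
have [w [[h1 h2] hw hs hx hy]] := (HT q0).1 Tq.
apply/HT; exists w; split => //.
- move=> i /=; rewrite mxE; have := mono_e a (q0.1 0 i) (kk.1 0 i) (k1 i); have := hx i; lra.
- move=> j /=; rewrite mxE; have := mono_e a (q0.2 0 j + kk.2 0 j) (- kk.2 0 j).
  rewrite addrK oppr_ge0 => /(_ (k2 j)); have := hy j; lra.
Qed.

Lemma sum_scale {R : realType} {l} (s : R) (w : 'rV[R]_l) (c : 'I_l -> R) :
  \sum_k (\row_k (s * w 0 k)) 0 k * c k = s * (\sum_k w 0 k * c k).
Proof. by rewrite mulr_sumr; apply: eq_bigr => k _; rewrite mxE mulrA. Qed.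

Lemma gth_cstr (R : realType) (a : R) m n l (X : 'I_l -> 'rV[R]_m)
  (Y : 'I_l -> 'rV[R]_n) (T : set ('rV[R]_m * 'rV[R]_n)) :
  (forall p, T p <-> exists u, cstr a X Y false p u) -> graph_translation_homothetic T.
Proof.
move=> HT x y Txy d [ho1 ho2].
have [w [[h1 h2] hw hs hx hy]] := (HT (x, y)).1 Txy.
apply/HT; exists (\row_k (expR (a * d) * w 0 k)); split => //.
- by move=> k; rewrite mxE; apply: mulr_ge0 => //; exact: expR_ge0.
- move=> i /=; rewrite !mxE sum_scale mulrDr expRD.
  have -> : a * (expR (a * x 0 i) * expR (a * d)) -
      a * (expR (a * d) * \sum_k w 0 k * expR (a * X k 0 i)) =
    expR (a * d) * (a * expR (a * x 0 i) - a * \sum_k w 0 k * expR (a * X k 0 i)).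
    by ring.
  by apply: mulr_ge0; [exact: expR_ge0 | exact: hx].
- move=> j /=; rewrite !mxE sum_scale mulrDr expRD.
  have -> : a * (expR (a * d) * \sum_k w 0 k * expR (a * Y k 0 j)) -
      a * (expR (a * y 0 j) * expR (a * d)) =
    expR (a * d) * (a * (\sum_k w 0 k * expR (a * Y k 0 j)) - a * expR (a * y 0 j)).
    by ring.
  by apply: mulr_ge0; [exact: expR_ge0 | exact: hy].
Qed.


Lemma lim_ineq {R : realType} {T U : topologicalType} (g : T -> R) (h : U -> R) p u :
  {for p, continuous g} -> {for u, continuous h} ->
  (forall B W, nbhs p B -> nbhs u W -> exists q u', [/\ B q, W u' & 0 <= g q + h u']) ->
  0 <= g p + h u.
Proof.
move=> gc hc H; rewrite leNgt; apply/negP => neg.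
have e0 : 0 < - (g p + h u) / 2 by rewrite divr_gt0 // oppr_gt0.
have [q [u' [Bq Wu hq]]] := H _ _ (cvgr_dist_lt _ _ gc _ e0) (cvgr_dist_lt _ _ hc _ e0).
move: Bq Wu; rewrite /= !ltr_norml => /andP[b1 b2] /andP[w1 w2].
lra.
Qed.

Lemma cont_sum {R : realType} {T : topologicalType} {l} (f : 'I_l -> T -> R) x :
  (forall k, {for x, continuous (f k)}) -> {for x, continuous (fun y => \sum_k f k y)}.
Proof.
move=> hf.
suff H : forall r : seq 'I_l, {for x, continuous (fun y => \sum_(k <- r) f k y)}.
  exact: H.
elim=> [|a r IH].
  have -> : (fun y => \sum_(k <- [::]) f k y) = (fun _ => 0).
    by apply: funext => y; rewrite big_nil.
  exact: cst_continuous.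
have -> : (fun y => \sum_(k <- a :: r) f k y) = (f a \+ (fun y => \sum_(k <- r) f k y)).
  by apply: funext => y; rewrite big_cons.
exact: continuousD.
Qed.

Lemma cont_fst_coord {R : realType} {m n} (p : 'rV[R]_m * 'rV[R]_n) i :
  {for p, continuous (fun q : 'rV[R]_m * 'rV[R]_n => q.1 0 i)}.
Proof.
apply: (@continuous_comp _ _ _ fst (fun M : 'rV[R]_m => M 0 i)); first exact: cvg_fst.
exact: coord_continuous.
Qed.

Lemma cont_snd_coord {R : realType} {m n} (p : 'rV[R]_m * 'rV[R]_n) j :
  {for p, continuous (fun q : 'rV[R]_m * 'rV[R]_n => q.2 0 j)}.
Proof.
apply: (@continuous_comp _ _ _ snd (fun M : 'rV[R]_n => M 0 j)); first exact: cvg_snd.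
exact: coord_continuous.
Qed.

Lemma cont_aexp {R : realType} {T : topologicalType} (a : R) (f : T -> R) x :
  {for x, continuous f} -> {for x, continuous (fun y => a * expR (a * f y))}.
Proof.
move=> fc; apply: continuousM; first exact: cst_continuous.
apply: (@continuous_comp _ _ _ (fun y => a * f y) expR); last exact: continuous_expR.
by apply: continuousM => //; exact: cst_continuous.
Qed.

Lemma cont_lin {R : realType} {l} (a : R) (c : 'I_l -> R) (u : 'rV[R]_l) :
  {for u, continuous (fun v : 'rV[R]_l => a * \sum_k v 0 k * c k)}.
Proof.
have hs : {for u, continuous (fun v : 'rV[R]_l => \sum_k v 0 k * c k)}.
  apply: (@cont_sum R _ l (fun k (v : 'rV[R]_l) => v 0 k * c k)) => k.
  apply: continuousM; first exact: coord_continuous.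
  exact: cst_continuous.
apply: continuousM hs; exact: cst_continuous.
Qed.


Lemma closed_witness {R : realType} {T : topologicalType} l (P : set T)
  (S : T -> 'rV[R]_l -> Prop) :
  (forall (p : T) (u : 'rV[R]_l), (forall B W, nbhs p B -> nbhs u W ->
      exists q u', [/\ B q, W u' & S q u']) -> S p u) ->
  (forall q, P q <-> exists u, S q u) ->
  (forall p : T, exists M N, nbhs p N /\
     forall q, N q -> P q -> exists u, S q u /\ forall k, 0 <= u 0 k <= M) ->
  closed P.
Proof.
move=> Scl HP Hb p clp.
have [M [N0 [N0p HN0]]] := Hb p.
pose K := [set v : 'rV[R]_l | forall i, `[0, M]%classic (v ord0 i)].
have cK : compact K by apply: (@rV_compact _ _ (fun _ => `[0, M]%classic)) => _; exact: segment_compact.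
pose G (B : set T) := [set u | K u /\ exists q, [/\ B q, N0 q & S q u]].
pose F := filter_from (nbhs p) G.
have FF : ProperFilter F.
  apply: filter_from_proper.
    apply: filter_from_filter; first by exists setT; exact: filterT.
    move=> i j ni nj; exists (i `&` j); first exact: filterI.
    by move=> u [Ku [q [[iq jq] N0q Squ]]]; split; split => //; exists q.
  move=> B nB; have [q [Pq [Bq N0q]]] := clp _ (filterI nB N0p).
  have [u [Squ ub]] := HN0 q N0q Pq.
  exists u; split; last by exists q.
  by move=> i; rewrite /= in_itv /=; exact: ub.
have FK : F K by exists setT; [exact: filterT | move=> u []].
have [u [Ku clu]] := cK F FF FK.
apply/HP; exists u; apply: Scl => B W nB nW.
have FG : F (G B) by exists B.
have [u' [[Ku' [q [Bq N0q Sq]]] Wu']] := clu (G B) W FG nW.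
by exists q, u'.
Qed.

Lemma cstr_closure {R : realType} (a : R) m n l (X : 'I_l -> 'rV[R]_m)
  (Y : 'I_l -> 'rV[R]_n) V (p : 'rV[R]_m * 'rV[R]_n) (u : 'rV[R]_l) :
  (forall B W, nbhs p B -> nbhs u W ->
     exists q u', [/\ B q, W u' & cstr a X Y V q u']) -> cstr a X Y V p u.
Proof.
move=> H.
have L : forall (g : 'rV[R]_m * 'rV[R]_n -> R) (h : 'rV[R]_l -> R),
    {for p, continuous g} -> {for u, continuous h} ->
    (forall q u', cstr a X Y V q u' -> 0 <= g q + h u') -> 0 <= g p + h u.
  move=> g h gc hc Hgh; apply: lim_ineq gc hc _ => B W nB nW.
  have [q [u' [Bq Wu' C]]] := H B W nB nW; exists q, u'; split => //; exact: Hgh.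
have c1 : {for u, continuous (fun v : 'rV[R]_l => \sum_k v 0 k)}.
  apply: (@cont_sum R _ l (fun k (v : 'rV[R]_l) => v 0 k)) => k; exact: coord_continuous.
split.
- split => [i|j].
  + have := L (fun q => q.1 0 i) (fun _ => 0) (cont_fst_coord p i) (@cst_continuous _ _ 0 u).
    rewrite addr0; apply => q u' [[h1 _] _ _ _ _]; rewrite addr0; exact: h1.
  + have := L (fun q => q.2 0 j) (fun _ => 0) (cont_snd_coord p j) (@cst_continuous _ _ 0 u).
    rewrite addr0; apply => q u' [[_ h2] _ _ _ _]; rewrite addr0; exact: h2.
- move=> k; have := L (fun _ => 0) (fun v => v 0 k) (@cst_continuous _ _ 0 p)
     (@coord_continuous _ _ _ 0 k u).
  rewrite add0r; apply => q u' [_ hw _ _ _]; rewrite add0r; exact: hw.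
- move=> hV.
  have A1 := L (fun _ => -1) (fun v => \sum_k v 0 k) (@cst_continuous _ _ _ p) c1.
  have A2 := L (fun _ => 1) (fun v => - \sum_k v 0 k) (@cst_continuous _ _ _ p)
    (continuousN c1).
  have B1 : 0 <= -1 + \sum_k u 0 k.
    by apply: A1 => q u' [_ _ hs _ _]; rewrite hs // addNr.
  have B2 : 0 <= 1 - \sum_k u 0 k.
    by apply: A2 => q u' [_ _ hs _ _]; rewrite hs // subrr.
  lra.
- move=> i.
  have := L (fun q => a * expR (a * q.1 0 i))
    (fun v => - (a * \sum_k v 0 k * expR (a * X k 0 i)))
    (cont_aexp a _ _ (cont_fst_coord p i)) (continuousN (cont_lin a _ u)).
  by apply => q u' [_ _ _ hx _]; exact: hx.
- move=> j.
  have := L (fun q => - (a * expR (a * q.2 0 j)))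
    (fun v => a * \sum_k v 0 k * expR (a * Y k 0 j))
    (continuousN (cont_aexp a _ _ (cont_snd_coord p j))) (cont_lin a _ u).
  by rewrite addrC; apply => q u' [_ _ _ _ hy]; rewrite addrC; exact: hy.
Qed.


Lemma le_sum_term {R : realType} {l} (f : 'I_l -> R) k :
  (forall j, 0 <= f j) -> f k <= \sum_j f j.
Proof. by move=> h; rewrite (bigD1 k) //= lerDl; apply: sumr_ge0 => j _; exact: h. Qed.

Lemma near_lt {R : realType} {T : topologicalType} (g : T -> R) p :
  {for p, continuous g} -> nbhs p [set q | g q < g p + 1].
Proof.
move=> gc; apply: filterS (cvgr_dist_lt _ _ gc _ ltr01) => q /=.
rewrite ltr_norml => /andP[h _]; lra.
Qed.

Lemma exp_ge1 {R : realType} {x : R} : 0 <= x -> 1 <= expR x.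
Proof. by rewrite -expR0 ler_expR. Qed.

Lemma exp_le1 {R : realType} {x : R} : x <= 0 -> expR x <= 1.
Proof. by rewrite -expR0 ler_expR. Qed.

Lemma bound_wit (R : realType) (a : R) m n l (X : 'I_l -> 'rV[R]_m)
  (Y : 'I_l -> 'rV[R]_n) V (p : 'rV[R]_m * 'rV[R]_n) :
  a != 0 -> (forall k i, 0 <= X k 0 i) -> (forall k j, 0 <= Y k 0 j) ->
  exists M N, nbhs p N /\ forall q, N q -> (exists u, cstr a X Y V q u) ->
    exists u, cstr a X Y V q u /\ forall k, 0 <= u 0 k <= M.
Proof.
move=> a0 hX hY.
case: V.
  exists 1, setT; split; first exact: filterT.
  move=> q _ [u C]; exists u; split => // k.
  case: C => _ hw hs _ _; rewrite hw /= -(hs erefl).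
  exact: (le_sum_term (fun k => u 0 k)).
case: (ltgtP a 0) => [an|ap|ae]; last by rewrite ae eqxx in a0.
-
  case: (pickP (fun _ : 'I_n => true)) => [j0 _|hn].
  + exists (\sum_k expR (- a * Y k 0 j0)), setT; split; first exact: filterT.
    move=> q _ [u C]; exists u; split => // k.
    case: C => [[h1 h2] hw _ _ hy]; rewrite hw /=.
    have S1 : \sum_k u 0 k * expR (a * Y k 0 j0) <= 1.
      apply: (le_trans _ (exp_le1 (mulr_le0_ge0 (ltW an) (h2 j0)))).
      by have := hy j0; rewrite subr_ge0 ler_nM2l.
    have T1 : u 0 k * expR (a * Y k 0 j0) <= 1.
      apply: (le_trans _ S1); apply: (le_sum_term (fun k => u 0 k * expR (a * Y k 0 j0))).
      by move=> j; apply: mulr_ge0 => //; exact: expR_ge0.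
    have E1 : expR (- a * Y k 0 j0) <= \sum_k expR (- a * Y k 0 j0).
      by apply: (le_sum_term (fun k => expR (- a * Y k 0 j0))) => j; exact: expR_ge0.
    apply: (le_trans _ E1).
    have -> : u 0 k = u 0 k * expR (a * Y k 0 j0) * expR (- a * Y k 0 j0).
      by rewrite -mulrA -expRD mulNr addrN expR0 mulr1.
    rewrite -[X in _ <= X]mul1r; apply: ler_wpM2r => //; exact: expR_ge0.
  + exists (\sum_k \sum_i expR (- a * X k 0 i)), setT; split; first exact: filterT.
    move=> q _ [u [[h1 h2] hw hs hx hy]].
    exists (\row_k \sum_i expR (- a * X k 0 i)); split; last first.
      move=> k; rewrite mxE; apply/andP; split.
        by apply: sumr_ge0 => i _; exact: expR_ge0.
      apply: (le_sum_term (fun k => \sum_i expR (- a * X k 0 i))) => j.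
      by apply: sumr_ge0 => i _; exact: expR_ge0.
    split => //.
    * by move=> k; rewrite mxE; apply: sumr_ge0 => i _; exact: expR_ge0.
    * move=> i; case: (pickP (fun _ : 'I_l => true)) => [k0 _|hl]; last first.
        have -> : \sum_k (\row_k \sum_i expR (- a * X k 0 i)) 0 k * expR (a * X k 0 i)
           = \sum_k u 0 k * expR (a * X k 0 i).
          by apply: eq_bigr => k; have := hl k.
        exact: hx.
      rewrite subr_ge0 ler_nM2l //.
      apply: le_trans (exp_le1 (mulr_le0_ge0 (ltW an) (h1 i))) _.
      apply: (le_trans _ (le_sum_term (fun k =>
         (\row_k \sum_i expR (- a * X k 0 i)) 0 k * expR (a * X k 0 i)) k0 _)); last first.
        move=> k; rewrite mxE; apply: mulr_ge0; last exact: expR_ge0.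
        by apply: sumr_ge0 => i' _; exact: expR_ge0.
      rewrite mxE.
      have <- : expR (- a * X k0 0 i) * expR (a * X k0 0 i) = 1.
        by rewrite -expRD mulNr addNr expR0.
      apply: ler_wpM2r; first exact: expR_ge0.
      apply: (le_sum_term (fun i => expR (- a * X k0 0 i))) => i'; exact: expR_ge0.
    * by move=> j; have := hn j.
-
  case: (pickP (fun _ : 'I_m => true)) => [i0 _|hm].
  + exists (expR (a * (p.1 0 i0 + 1))), [set q : 'rV[R]_m * 'rV[R]_n | q.1 0 i0 < p.1 0 i0 + 1].
    split; first exact: (near_lt _ _ (cont_fst_coord p i0)).
    move=> q /= hq [u C]; exists u; split => // k.
    case: C => [[h1 h2] hw _ hx _]; rewrite hw /=.
    have S1 : \sum_k u 0 k * expR (a * X k 0 i0) <= expR (a * q.1 0 i0).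
      by have := hx i0; rewrite subr_ge0 ler_pM2l.
    apply: le_trans (ler_peMr (hw k) (exp_ge1 (mulr_ge0 (ltW ap) (hX k i0)))) _.
    apply: le_trans (le_sum_term (fun k => u 0 k * expR (a * X k 0 i0)) k _) _.
      by move=> j; apply: mulr_ge0 => //; exact: expR_ge0.
    apply: le_trans S1 _; rewrite ler_expR ler_pM2l //; exact: ltW.
  + exists (\sum_j expR (a * (p.2 0 j + 1))), [set q : 'rV[R]_m * 'rV[R]_n | forall j, q.2 0 j < p.2 0 j + 1].
    split.
      have FF := (fun j => near_lt _ _ (cont_snd_coord p j)). have G := filter_forall _ FF. exact: G.
    move=> q /= hq [u [[h1 h2] hw hs hx hy]].
    exists (\row_k \sum_j expR (a * q.2 0 j)); split; last first.
      move=> k; rewrite mxE; apply/andP; split.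
        by apply: sumr_ge0 => j _; exact: expR_ge0.
      apply: ler_sum => j _; rewrite ler_expR ler_pM2l //; exact: ltW.
    split => //.
    * by move=> k; rewrite mxE; apply: sumr_ge0 => j _; exact: expR_ge0.
    * by move=> i; have := hm i.
    * move=> j; case: (pickP (fun _ : 'I_l => true)) => [k0 _|hl]; last first.
        have -> : \sum_k (\row_k \sum_j expR (a * q.2 0 j)) 0 k * expR (a * Y k 0 j)
           = \sum_k u 0 k * expR (a * Y k 0 j).
          by apply: eq_bigr => k; have := hl k.
        exact: hy.
      rewrite subr_ge0 ler_pM2l //.
      apply: le_trans _ (le_sum_term (fun k =>
         (\row_k \sum_j expR (a * q.2 0 j)) 0 k * expR (a * Y k 0 j)) k0 _); last first.
        move=> k; rewrite mxE; apply: mulr_ge0; last exact: expR_ge0.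
        by apply: sumr_ge0 => j' _; exact: expR_ge0.
      rewrite mxE.
      have E2 : 0 <= \sum_j expR (a * q.2 0 j) by apply: sumr_ge0 => j' _; exact: expR_ge0.
      apply: (le_trans _ (ler_peMr E2 (exp_ge1 (mulr_ge0 (ltW ap) (hY k0 j))))).
      by apply: (le_sum_term (fun j => expR (a * q.2 0 j))) => j'; exact: expR_ge0.
Qed.

Theorem mainTheorem3 (R : realType) (alpha : R) (m n l : nat)
    (X : 'I_l -> 'rV[R]_m) (Y : 'I_l -> 'rV[R]_n)
    (halpha : alpha != 0)
    (hX : forall k i, 0 <= X k 0 i) (hY : forall k j, 0 <= Y k 0 j) :
  [/\ closed (TQC alpha X Y) /\ closed (TQV alpha X Y),
      Qconvex alpha (TQC alpha X Y) /\ Qconvex alpha (TQV alpha X Y),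
      free_disposal (TQC alpha X Y) /\ free_disposal (TQV alpha X Y)
    & graph_translation_homothetic (TQC alpha X Y)].
Proof.
have HC p := @TQC_iff R alpha m n l X Y p halpha.
have HV p := @TQV_iff R alpha m n l X Y p halpha.
split.
- split.
  + apply: (@closed_witness R _ l _ (cstr alpha X Y false)).
    * by move=> p u; exact: cstr_closure.
    * exact: HC.
    * move=> p; have [M [N [Np HN]]] := @bound_wit R alpha m n l X Y false p halpha hX hY.
      by exists M, N; split => // q Nq /HC; exact: HN.
  + apply: (@closed_witness R _ l _ (cstr alpha X Y true)).
    * by move=> p u; exact: cstr_closure.
    * exact: HV.
    * move=> p; have [M [N [Np HN]]] := @bound_wit R alpha m n l X Y true p halpha hX hY.
      by exists M, N; split => // q Nq /HV; exact: HN.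
- split.
  + exact: (@Qconvex_cstr R alpha m n l X Y false _ halpha HC).
  + exact: (@Qconvex_cstr R alpha m n l X Y true _ halpha HV).
- split.
  + exact: (@free_disposal_cstr R alpha m n l X Y false _ HC).
  + exact: (@free_disposal_cstr R alpha m n l X Y true _ HV).
- exact: (@gth_cstr R alpha m n l X Y _ HC).
Qed.
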